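(* For every partition $(P_H,P_L)$ of $E$ with $P_L\neq\emptyset$ we have $\sum_{e\in P_L}\mathrm{wt}_{P_L}(e)\le b$. If moreover $0<\epsilon<1$, $\bar b,\bar w$ satisfy $b/2\le\bar b\le 2b$ and $w/6\le\bar w\le 6w$, and $(P_H,P_L)$ is appropriate with respect to $\bar b,\bar w,\epsilon$, then $$b(1-c_H\epsilon)\le \sum_{e\in P_L}\mathrm{wt}_{P_L}(e)\le b,$$ where $c_H=1.77\times 10^4$.
   Context: Let $G=(V,E)$ be a bipartite graph with bipartition $V=U\cup L$; $d_v$ is the degree of $v$; for $e=(u,v)$, $d_e=d_u+d_v-2$; $w$ is the number of wedges (paths with two edges). A butterfly is a set of four distinct vertices $\{u_1,u_2,v_1,v_2\}$, $u_i\in U$, $v_i\in L$, with all four pairs $u_iv_j$ edges (its four edges); $b$ is the number of butterflies and $b(e)$ the number containing edge $e$. Given a nonempty $P_L\subseteq E$: for a butterfly $B$, $\mathrm{wt}_{P_L}(B)=0$ if none of its edges lies in $P_L$, and $\mathrm{wt}_{P_L}(B)=1/\ell$ if exactly $\ell>0$ of its edges lie in $P_L$; for an edge $e$, $\mathrm{wt}_{P_L}(e)=0$ if $e\notin P_L$ and $\mathrm{wt}_{P_L}(e)=\sum_{B\ni e}\mathrm{wt}_{P_L}(B)$ (sum over butterflies containing $e$) if $e\in P_L$. Given $\bar b,\bar w,\epsilon$, an edge $e$ is heavy if $b(e)>2\bar b^{3/4}/\epsilon^{1/4}$ or $d_e>\bar w/(\epsilon\bar b)^{1/4}$, and light if $b(e)<\bar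 b^{3/4}/(2\epsilon^{1/4})$ and $d_e<\bar w/(\epsilon\bar b)^{1/4}$. A partition $(P_H,P_L)$ of $E$ is appropriate if every heavy edge is in $P_H$ and every light edge is in $P_L$. *)

(* Defs.v *)
From HB Require Import structures.
From mathcomp Require Import all_boot all_order all_algebra.
From mathcomp Require Import all_classical all_reals all_analysis.
Set Implicit Arguments. Unset Strict Implicit. Unset Printing Implicit Defensive.
Import Order.TTheory GRing.Theory Num.Theory.
Local Open Scope ring_scope.

(* A bipartite graph with sides U and L is given by its edge set E : {set U * L}. *)
Section Bip.
Variables (U L : finType) (E : {set U * L}).

Definition degU (u : U) : nat := #|[set v : L | (u, v) \in E]|.
Definition degL (v : L) : nat := #|[set u : U | (u, v) \in E]|.

Definition wedges : {set {set U * L}} :=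
  [set S : {set U * L} | [&& S \subset E, #|S| == 2 &
     [exists e1 in S, exists e2 in S,
        (e1 != e2) && ((e1.1 == e2.1) || (e1.2 == e2.2))]]].
Definition nwedges : nat := #|wedges|.

(* a butterfly {u1,u2,v1,v2} is encoded by the pair ({u1,u2},{v1,v2}) *)
Definition bedges (X : {set U} * {set L}) : {set U * L} := finset.setX X.1 X.2.
Definition butterflies : {set {set U} * {set L}} :=
  [set X : {set U} * {set L} | [&& #|X.1| == 2, #|X.2| == 2 & bedges X \subset E]].
Definition nbutterflies : nat := #|butterflies|.
Definition nbutterflies_e (e : U * L) : nat :=
  #|[set X in butterflies | e \in bedges X]|.

Variable R : realType.

Definition wtB (PL : {set U * L}) (X : {set U} * {set L}) : R :=
  let l := #|bedges X :&: PL| in if l == 0%N then 0 else (l%:R)^-1.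

Definition wtE (PL : {set U * L}) (e : U * L) : R :=
  if e \in PL then \sum_(X in butterflies | e \in bedges X) wtB PL X else 0.

Definition dedge (e : U * L) : R := (degU e.1)%:R + (degL e.2)%:R - 2.

Definition is_partition (PH PL : {set U * L}) : Prop :=
  PH :|: PL = E /\ PH :&: PL = finset.set0.

Definition heavy (bb wb eps : R) (e : U * L) : Prop :=
  (nbutterflies_e e)%:R > 2 * powR bb (3/4) / powR eps (1/4)
  \/ dedge e > wb / powR (eps * bb) (1/4).

Definition light (bb wb eps : R) (e : U * L) : Prop :=
  (nbutterflies_e e)%:R < powR bb (3/4) / (2 * powR eps (1/4))
  /\ dedge e < wb / powR (eps * bb) (1/4).

Definition appropriate (bb wb eps : R) (PH PL : {set U * L}) : Prop :=
  is_partition PH PL /\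
  (forall e, e \in E -> heavy bb wb eps e -> e \in PH) /\
  (forall e, e \in E -> light bb wb eps e -> e \in PL).

End Bip.

(* Main.v *)
Require Import Defs.
From HB Require Import structures.
From mathcomp Require Import all_boot all_order all_algebra.
From mathcomp Require Import all_classical all_reals all_analysis.
From mathcomp Require Import ring lra.
Import Order.TTheory GRing.Theory Num.Theory.
Local Open Scope ring_scope.


Lemma pow4_le (R : realType) (x y : R) : 0 <= x -> 0 <= y -> x ^+ 4 <= y ^+ 4 -> x <= y.
Proof. move=> hx hy h. by rewrite -(ler_pXn2r (n:=4)) // ?nnegrE. Qed.

Lemma powR14 (R : realType) (x : R) : 0 <= x -> powR x (1/4) ^+ 4 = x.
Proof.
move=> hx. rewrite -powR_mulrn ?powR_ge0 // -powRrM.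
have -> : (1 / 4 * 4%:R : R) = 1 by field.
by rewrite powRr1.
Qed.

Lemma aux14 (R : realType) (x y : R) : 0 < y -> x * 9261 / 15625 <= 8 * y -> x <= 14 * y.
Proof. move=> h1 h2; lra. Qed.

Lemma final_real (R : realType) (b w eps bb wb m m1 m2 N : R) :
  0 < b -> 0 < w -> 0 < eps -> b / 2 <= bb -> bb <= 2 * b -> w / 6 <= wb ->
  0 <= m1 -> 0 <= m2 -> m <= m1 + m2 -> 4 <= m -> 4 * N <= m ^+ 2 ->
  m1 * (powR bb (3/4) / (2 * powR eps (1/4))) <= 4 * b ->
  m2 * (wb / powR (eps * bb) (1/4)) <= 2 * w ->
  N <= 17700%:R * eps * b.
Proof.
move=> b0 w0 e0 hb1 hb2 hw hm1 hm2 hm hm4 hN h1 h2.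
have bb0 : 0 < bb by lra.
have wb0 : 0 < wb by lra.
have hpq : powR (eps * bb) (1/4) = powR eps (1/4) * powR bb (1/4) by rewrite powRM ?ltW.
have hq3 : powR bb (3/4) = powR bb (1/4) ^+ 3.
  rewrite -powR_mulrn ?powR_ge0 // -powRrM. congr powR. by field.
rewrite hq3 in h1. rewrite hpq in h2.
have p0 : 0 < powR eps (1/4) by rewrite powR_gt0.
have q0 : 0 < powR bb (1/4) by rewrite powR_gt0.
have r0 : 0 < powR b (1/4) by rewrite powR_gt0.
have p4 : powR eps (1/4) ^+ 4 = eps by rewrite powR14 ?ltW.
have q4 : powR bb (1/4) ^+ 4 = bb by rewrite powR14 ?ltW.
have r4 : powR b (1/4) ^+ 4 = b by rewrite powR14 ?ltW.
move: h1 h2 p0 q0 r0 p4 q4 r4.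
generalize (powR eps (1/4)) (powR bb (1/4)) (powR b (1/4)) => p q r.
move=> h1 h2 p0 q0 r0 p4 q4 r4.
have qlo : 21/25 * r <= q.
  apply: pow4_le; [lra| lra|]. rewrite q4 exprMn r4. 
  have H : ((21/25 : R)) ^+ 4 <= 1/2 by rewrite !exprS expr0; lra.
  have H' : (21/25 : R) ^+ 4 * b <= 1/2 * b by rewrite ler_pM2r.
  lra.
have qhi : q <= 6/5 * r.
  apply: pow4_le; [lra| lra|]. rewrite q4 exprMn r4. 
  have H : 2 <= ((6/5 : R)) ^+ 4 by rewrite !exprS expr0; lra.
  have H' : 2 * b <= (6/5 : R) ^+ 4 * b by rewrite ler_pM2r.
  lra.
have m1b : m1 * q ^+ 3 <= 8 * r ^+ 4 * p.
  rewrite r4. move: h1. rewrite mulrA ler_pdivrMr; last by lra. move=> H. apply: (le_trans H). rewrite le_eqVlt; apply/orP; left; apply/eqP; ring.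
have q3 : (21/25 * r) ^+ 3 <= q ^+ 3 by rewrite lerXn2r // ?nnegrE; lra.
have m1r : m1 <= 14 * r * p.
  have : m1 * (21/25 * r) ^+ 3 <= 8 * r ^+ 4 * p.
    apply: le_trans m1b. by rewrite ler_wpM2l.
  rewrite exprMn => H.
  have r3 : 0 < r ^+ 3 by rewrite exprn_gt0.
  have r4e : r ^+ 4 = r ^+ 3 * r by rewrite -exprSr.
  rewrite r4e in H.
  have c3 : (21/25 : R) ^+ 3 = 9261/15625 by rewrite !exprS expr0; lra.
  rewrite c3 in H.
  have H2 : (m1 * 9261/15625) * r ^+ 3 <= (8 * r * p) * r ^+ 3.
    have -> : 8 * r * p * r ^+ 3 = 8 * (r ^+ 3 * r) * p by ring.
    by have -> : m1 * 9261 / 15625 * r ^+ 3 = m1 * ((9261 / 15625) * r ^+ 3) by ring.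
  rewrite ler_pM2r // in H2.
  have rp0 : 0 < r * p by rewrite mulr_gt0.
  have -> : 14 * r * p = 14 * (r * p) by ring.
  have E8 : 8 * r * p = 8 * (r * p) by ring.
  rewrite E8 in H2.
  exact: (@aux14 R _ _ rp0 H2).
have m2r : m2 <= 15 * r * p.
  have : m2 * wb <= (12 * (p * q)) * wb.
    move: h2. rewrite mulrA ler_pdivrMr; last by rewrite mulr_gt0.
    move=> H; apply: (le_trans H).
    have -> : 12 * (p * q) * wb = (12*wb) * (p*q) by ring.
    rewrite ler_pM2r ?mulr_gt0 //; lra.
  rewrite ler_pM2r // => H.
  have : p * q <= p * (6/5 * r) by rewrite ler_pM2l.
  have : 0 < r * p by rewrite mulr_gt0.
  move=> H1 H2.
  have -> : 15 * r * p = 15 * (r * p) by ring.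
  have E2 : p * (6/5 * r) = 6/5 * (r * p) by ring.
  rewrite E2 in H2.
  lra.
have mr : m <= 29 * (r * p) by lra.
have m4 : m ^+ 4 <= (29 * (r * p)) ^+ 4.
  rewrite lerXn2r ?nnegrE. all: try lra.
rewrite exprMn exprMn r4 p4 in m4.
have : 16 * m ^+ 2 <= m ^+ 4.
  have -> : m ^+ 4 = m ^+ 2 * m ^+ 2 by rewrite -exprD.
  rewrite ler_pM2r; last by rewrite exprn_gt0; lra.
  rewrite expr2. have H4 : 4 * 4 <= m * m by apply: ler_pM; lra.
  lra.
have : (29 : R) ^+ 4 = 841 * 841 by rewrite !exprS expr0; ring.
move=> H29 H16. rewrite H29 in m4.
have E : (17700%:R : R) = 177 * 100 by rewrite -natrM.
rewrite E. have : 0 < b * eps by rewrite mulr_gt0.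
lra.
Qed.

Lemma card_indic (T : finType) (A : {set T}) (P : pred T) :
  #|[set x in A | P x]| = (\sum_(x in A) (P x : nat))%N.
Proof.
rewrite -sum1_card big_mkcond /= [RHS]big_mkcond /=.
apply: eq_bigr => x _; rewrite inE; by case: (x \in A); case: (P x).
Qed.

Lemma dc (I J : finType) (S : {set I}) (A : {set J}) (g : I -> {set J}) :
  (forall X, X \in S -> g X \subset A) ->
  (\sum_(X in S) #|g X| = \sum_(e in A) #|[set X in S | e \in g X]|)%N.
Proof.
move=> hs.
rewrite (eq_bigr (fun X => \sum_(e in A) (e \in g X : nat))%N); last first.
  move=> X hX; rewrite -card_indic; apply: eq_card => e; rewrite inE.
  case E: (e \in g X); last by rewrite andbF.
  by rewrite (fintype.subsetP (hs X hX)).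
rewrite exchange_big; apply: eq_bigr => e _. by rewrite card_indic.
Qed.

Lemma sum_sub_le (R : realType) (T : finType) (A B : {set T}) (F : T -> R) :
  A \subset B -> (forall x, x \in B -> 0 <= F x) ->
  \sum_(x in A) F x <= \sum_(x in B) F x.
Proof.
move=> hAB hF.
rewrite big_mkcond [X in _ <= X]big_mkcond /=; apply: ler_sum => x _.
case: ifP => hA; first by rewrite (fintype.subsetP hAB x hA).
case: ifP => hB //; exact: hF.
Qed.

Definition oth (T : finType) (A : {set T}) (a : T) : T := odflt a [pick x in A :\ a].
Arguments oth {T}.

Lemma oth_spec (T : finType) (A : {set T}) (a : T) : #|A| = 2%N -> a \in A ->
  [/\ oth A a \in A, oth A a != a & A = [set a; oth A a]].
Proof.
move=> h2 ha; rewrite /oth; case: pickP => [x | h0] /=.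
  rewrite !inE => /andP[xa xA]; split => //.
  apply/eqP; rewrite eq_sym eqEcard h2 cards2 eq_sym xa andbT.
  by apply/fintype.subsetP => y; rewrite !inE => /orP[] /eqP ->.
exfalso. have := cardsD1 a A. rewrite ha h2 (eq_card0 h0). by [].
Qed.
Arguments oth_spec {T A a}.

Section Comb.
Variables (U L : finType) (E : {set U * L}).

Lemma bfly_card X : X \in butterflies E -> #|bedges X| = 4%N.
Proof. by rewrite inE => /and3P [h1 h2 h3]; rewrite /bedges cardsX (eqP h1) (eqP h2). Qed.

Lemma bfly_sub X : X \in butterflies E -> bedges X \subset E.
Proof. by rewrite inE => /and3P [h1 h2 h3]. Qed.

Lemma sum_wt (R : realType) (PL : {set U * L}) : \sum_(e in PL) wtE E R PL e =
  (#|[set X in butterflies E | bedges X :&: PL != finset.set0]|)%:R.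
Proof.
rewrite /wtE (eq_bigr (fun e => \sum_(X in butterflies E | e \in bedges X) wtB R PL X)); last by move=> e ->.
rewrite (exchange_big_dep (fun X => X \in butterflies E)) /=; last by move=> e X _ /andP[].
rewrite card_indic natr_sum; apply: eq_bigr => X hX.
rewrite (eq_bigl (fun e => e \in bedges X :&: PL)); last first.
  by move=> e; rewrite finset.in_setI hX /= andbC.
rewrite sumr_const /wtB.
case: eqP => h.
  rewrite h mulr0n. suff -> : (bedges X :&: PL != finset.set0) = false by [].
  by rewrite -cards_eq0 h.
have -> : (bedges X :&: PL != finset.set0) = true by rewrite -cards_eq0; apply/eqP.
by rewrite -[LHS]mulr_natr mulVf // pnatr_eq0; apply/eqP.
Qed.

Lemma wedge_memU u v v' : (u,v) \in E -> (u,v') \in E -> v != v' ->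
  [set (u,v); (u,v')] \in wedges E.
Proof.
move=> h1 h2 hv.
have hne : (u,v) != (u,v') by rewrite xpair_eqE eqxx.
rewrite inE; apply/and3P; split.
- by apply/fintype.subsetP => x; rewrite !inE => /orP[] /eqP ->.
- by rewrite cards2 hne.
- apply/existsP; exists (u,v); rewrite !inE eqxx /=.
  apply/existsP; exists (u,v'); by rewrite !inE eqxx orbT /= hne eqxx.
Qed.

Lemma wedge_memL u u' v : (u,v) \in E -> (u',v) \in E -> u != u' ->
  [set (u,v); (u',v)] \in wedges E.
Proof.
move=> h1 h2 hv.
have hne : (u,v) != (u',v) by rewrite xpair_eqE eqxx andbT.
rewrite inE; apply/and3P; split.
- by apply/fintype.subsetP => x; rewrite !inE => /orP[] /eqP ->.
- by rewrite cards2 hne.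
- apply/existsP; exists (u,v); rewrite !inE eqxx /=.
  apply/existsP; exists (u',v); by rewrite !inE eqxx orbT /= hne eqxx orbT.
Qed.

Lemma dedge_le u0 v0 : (u0,v0) \in E ->
  ((degU E u0).-1 + (degL E v0).-1 <= #|[set W in wedges E | (u0,v0) \in W]|)%N.
Proof.
move=> he.
set A := [set v | (u0,v) \in E] :\ v0.
set B := [set u | (u,v0) \in E] :\ u0.
have cA : #|A| = (degU E u0).-1.
  by rewrite /degU (cardsD1 v0 [set v | (u0, v) \in E]) !inE he.
have cB : #|B| = (degL E v0).-1.
  by rewrite /degL (cardsD1 u0 [set u | (u, v0) \in E]) !inE he.
pose f := fun v => [set (u0,v0); (u0,v)].
pose g := fun u => [set (u0,v0); (u,v0)].
have fi : {in A &, injective f}.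
  move=> v1 v2; rewrite !inE => /andP[h1 _] /andP[h2 _] hf.
  have : (u0,v1) \in f v2 by rewrite -hf /f !inE eqxx orbT.
  rewrite /f !inE !xpair_eqE eqxx /= (negbTE h1) /=. by move/eqP.
have gi : {in B &, injective g}.
  move=> v1 v2; rewrite !inE => /andP[h1 _] /andP[h2 _] hf.
  have : (v1,v0) \in g v2 by rewrite -hf /g !inE eqxx orbT.
  rewrite /g !inE !xpair_eqE eqxx /= andbT (negbTE h1) /= andbT. by move/eqP.
have memP : forall W0, W0 \in wedges E -> (u0,v0) \in W0 ->
    W0 \in [set W in wedges E | (u0,v0) \in W].
  by move=> W0 h1 h2; apply/setIdP; split.
have sub : (f @: A) :|: (g @: B) \subset [set W in wedges E | (u0,v0) \in W].
  apply/fintype.subsetP => W; rewrite finset.in_setU => /orP[] /imsetP [x hx ->];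
    rewrite !inE in hx; case/andP: hx => hx1 hx2; apply: memP; rewrite ?set21 //.
  - by apply: wedge_memU => //; rewrite eq_sym.
  - by apply: wedge_memL => //; rewrite eq_sym.
have hI : (f @: A) :&: (g @: B) = finset.set0.
  apply/setP => W; rewrite !inE; apply/negbTE/andP => [[/imsetP[x hx ->] /imsetP[y hy heq]]].
  move: hx; rewrite !inE => /andP[hx1 _].
  have : (u0,x) \in g y by rewrite -heq !inE eqxx orbT.
  rewrite !inE !xpair_eqE eqxx /= (negbTE hx1) /= andbF. by [].
rewrite -cA -cB -(card_in_imset fi) -(card_in_imset gi).
apply: leq_trans (subset_leq_card sub). by rewrite cardsU hI cards0 subn0.
Qed.

Lemma dedgeE (R : realType) e : e \in E ->
  dedge E R e = ((degU E e.1).-1 + (degL E e.2).-1)%:R.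
Proof.
case: e => u0 v0 he /=.
have hU : (0 < degU E u0)%N by rewrite /degU card_gt0; apply/set0Pn; exists v0; rewrite inE.
have hL : (0 < degL E v0)%N by rewrite /degL card_gt0; apply/set0Pn; exists u0; rewrite inE.
have eU : (degU E u0)%:R = ((degU E u0).-1)%:R + 1 :> R by rewrite natr1 prednK.
have eL : (degL E v0)%:R = ((degL E v0).-1)%:R + 1 :> R by rewrite natr1 prednK.
rewrite /dedge /= eU eL natrD. lra.
Qed.

Lemma dedge_ge0 (R : realType) e : e \in E -> 0 <= dedge E R e.
Proof. move=> he; rewrite (dedgeE R e he); exact: ler0n. Qed.

Lemma dedge_sum (R : realType) : \sum_(e in E) dedge E R e <= 2 * (nwedges E)%:R.
Proof.
apply: (le_trans (y := (\sum_(e in E) #|[set W in wedges E | e \in W]|)%:R)).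
  rewrite natr_sum; apply: ler_sum => e he; rewrite dedgeE // ler_nat.
  by case: e he => u0 v0 he; exact: dedge_le.
have H := @dc _ _ (wedges E) E (fun W => W).
rewrite -H; last by move=> W; rewrite inE => /and3P[].
rewrite (eq_bigr (fun _ => 2%N)); last by move=> W; rewrite inE => /and3P[_ /eqP -> _].
by rewrite sum_nat_const /nwedges natrM mulrC.
Qed.

Lemma w_pos : (0 < nbutterflies E)%N -> (0 < nwedges E)%N.
Proof.
move=> /card_gt0P [X hX]. move: (hX); rewrite inE => /and3P [h1 h2 h3].
case/cards2P: h1 => u1 [u2 [hu e1]]. case/cards2P: h2 => v1 [v2 [hv e2]].
apply/card_gt0P; exists [set (u1,v1); (u1,v2)]; apply: wedge_memU => //;
  apply: (fintype.subsetP h3); by rewrite /bedges e1 e2 finset.in_setX !inE !eqxx ?orbT.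
Qed.

Lemma four_S (PH : {set U * L}) (S : {set {set U} * {set L}}) :
  (forall X, X \in S -> X \in butterflies E /\ bedges X \subset PH) ->
  (4 * #|S| <= #|PH| * #|PH|)%N.
Proof.
move=> hS.
have -> : (4 * #|S| = \sum_(X in S) #|bedges X|)%N.
  rewrite (eq_bigr (fun _ => 4%N)); last by move=> X /hS [hb _]; rewrite bfly_card.
  by rewrite sum_nat_const mulnC.
rewrite (@dc _ _ _ PH); last by move=> X /hS [].
apply: (@leq_trans (\sum_(e in PH) #|PH|)); last by rewrite sum_nat_const.
apply: leq_sum => e _.
pose opp := fun X : {set U} * {set L} => (oth X.1 e.1, oth X.2 e.2).
have inj : {in [set X in S | e \in bedges X] &, injective opp}.
  move=> [X1 X2] [Y1 Y2]; rewrite !inE => /andP[/hS[hX _] hXe] /andP[/hS[hY _] hYe] heq.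
  move: hX hY; rewrite !inE => /and3P[x1 x2 _] /and3P[y1 y2 _].
  move: hXe hYe => /andP[a1 a2] /andP[b1 b2].
  move: x1 x2 y1 y2 a1 a2 b1 b2 heq => /= x1 x2 y1 y2 a1 a2 b1 b2 heq.
  case: (oth_spec (eqP x1) a1) => _ _ ex1.
  case: (oth_spec (eqP x2) a2) => _ _ ex2.
  case: (oth_spec (eqP y1) b1) => _ _ ey1.
  case: (oth_spec (eqP y2) b2) => _ _ ey2.
  rewrite /opp /= in heq; case: heq => h1 h2.
  by congr pair; [rewrite ex1 ey1 h1 | rewrite ex2 ey2 h2].
rewrite -(card_in_imset inj); apply: subset_leq_card; apply/fintype.subsetP => z /imsetP [X hX ->].
move: hX; rewrite !inE => /andP[/hS[hX hsub] hXe].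
apply: (fintype.subsetP hsub).
move: hX; rewrite !inE => /and3P[x1 x2 _].
move: hXe => /andP[a1 a2].
case: (oth_spec (eqP x1) a1) => o1 _ _.
case: (oth_spec (eqP x2) a2) => o2 _ _.
by rewrite /opp /= o1 o2.
Qed.

Lemma nbe_sum (PH : {set U * L}) :
  (\sum_(e in PH) nbutterflies_e E e <= 4 * nbutterflies E)%N.
Proof.
rewrite /nbutterflies_e.
have H : (\sum_(e in PH) #|[set X in butterflies E | e \in bedges X]| =
          \sum_(X in butterflies E) #|bedges X :&: PH|)%N.
  rewrite (@dc _ _ _ PH (fun X => bedges X :&: PH)); last by move=> X _; exact: finset.subsetIr.
  apply: eq_bigr => e he; apply: eq_card => X; by rewrite !inE he andbT.
rewrite H. apply: (@leq_trans (\sum_(X in butterflies E) 4)).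
  apply: leq_sum => X hX; rewrite -(bfly_card _ hX); apply: subset_leq_card; exact: finset.subsetIl.
by rewrite sum_nat_const /nbutterflies mulnC.
Qed.

End Comb.
Arguments bfly_card {U L E X}.
Arguments bfly_sub {U L E X}.
Arguments w_pos {U L E}.
Arguments four_S {U L E PH S}.
Arguments nbe_sum {U L E}.
Arguments dedge_sum {U L E}.
Arguments dedge_ge0 {U L E R e}.
Arguments sum_wt {U L E}.

Theorem lemma10 (R : realType) (U L : finType) (E : {set U * L}) :
  (forall PH PL : {set U * L}, is_partition E PH PL -> PL != finset.set0 ->
     \sum_(e in PL) wtE E R PL e <= (nbutterflies E)%:R)
  /\
  (forall (eps bb wb : R) (PH PL : {set U * L}),
     0 < eps -> eps < 1 ->
     (nbutterflies E)%:R / 2 <= bb -> bb <= 2 * (nbutterflies E)%:R ->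
     (nwedges E)%:R / 6 <= wb -> wb <= 6 * (nwedges E)%:R ->
     PL != finset.set0 -> appropriate E bb wb eps PH PL ->
     (nbutterflies E)%:R * (1 - 17700%:R * eps) <= \sum_(e in PL) wtE E R PL e
     /\ \sum_(e in PL) wtE E R PL e <= (nbutterflies E)%:R).
Proof.
have part1 : forall PL : {set U * L}, \sum_(e in PL) wtE E R PL e <= (nbutterflies E)%:R.
  move=> PL; rewrite sum_wt ler_nat; apply: subset_leq_card.
  by apply/fintype.subsetP => X /setIdP[].
split.
  by move=> PH PL _ _; apply: part1.
move=> eps bb wb PH PL e0 e1 hb1 hb2 hw1 hw2 hPL [[hU hI] [_ hlight]].
split; last exact: part1.
rewrite sum_wt.
set Bt := [set X in butterflies E | bedges X :&: PL != finset.set0].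
set S := [set X in butterflies E | ~~ (bedges X :&: PL != finset.set0)].
have hBS : nbutterflies E = (#|Bt| + #|S|)%N.
  rewrite /nbutterflies /Bt /S !card_indic -big_split /= -sum1_card.
  by apply: eq_bigr => X _; case: (_ != _).
have hSsub : forall X, X \in S -> X \in butterflies E /\ bedges X \subset PH.
  move=> X /setIdP [hX hc]. split => //. apply/fintype.subsetP => e he.
  have heE : e \in E by apply: (fintype.subsetP (bfly_sub hX)).
  rewrite -hU finset.in_setU in heE. case/orP: heE => // hePL. exfalso.
  move/negP: hc; apply. apply/set0Pn; exists e; by rewrite finset.in_setI he hePL.
have key : (#|S|%:R : R) <= 17700%:R * eps * (nbutterflies E)%:R.
  have [S0|Spos] := eqVneq #|S| 0%N.
    rewrite S0; apply: mulr_ge0; last exact: ler0n.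
    by apply: mulr_ge0; [exact: ler0n | exact: ltW].
  have b0 : (0 < nbutterflies E)%N by rewrite hBS addn_gt0 !lt0n Spos orbT.
  have w0 := w_pos b0.
  have [X hXS] : exists X, X \in S by apply/card_gt0P; rewrite lt0n.
  have m4 : (4 <= #|PH|)%N.
    by case: (hSsub X hXS) => hX hsub; rewrite -(bfly_card hX); exact: subset_leq_card.
  set T := powR bb (3/4) / (2 * powR eps (1/4)).
  set D := wb / powR (eps * bb) (1/4).
  set P1 := [set e in PH | T <= (nbutterflies_e E e)%:R].
  set P2 := [set e in PH | D <= dedge E R e].
  have hPH : (#|PH| <= #|P1| + #|P2|)%N.
    apply: (@leq_trans #|P1 :|: P2|); last by rewrite cardsU leq_subr.
    apply: subset_leq_card; apply/fintype.subsetP => e he.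
    have heE : e \in E by rewrite -hU finset.in_setU he.
    rewrite finset.in_setU /P1 /P2 !inE he /=.
    case: (lerP T (nbutterflies_e E e)%:R) => hT //=.
    case: (lerP D (dedge E R e)) => hD //=.
    exfalso. have hePL : e \in PL by apply: hlight => //; split.
    have : e \in PH :&: PL by rewrite finset.in_setI he hePL.
    by rewrite hI inE.
  have h1 : (#|P1|%:R : R) * T <= 4 * (nbutterflies E)%:R.
    apply: (le_trans (y := \sum_(e in P1) (nbutterflies_e E e)%:R)).
      rewrite mulrC mulr_natr -sumr_const; apply: ler_sum => e.
      by rewrite /P1 !inE => /andP[_ h].
    apply: (le_trans (y := \sum_(e in PH) (nbutterflies_e E e)%:R)).
      apply: sum_sub_le; last by move=> *; exact: ler0n.
      by apply/fintype.subsetP => e; rewrite /P1 !inE => /andP[].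
    rewrite -natr_sum -natrM ler_nat; exact: nbe_sum.
  have h2 : (#|P2|%:R : R) * D <= 2 * (nwedges E)%:R.
    apply: (le_trans (y := \sum_(e in P2) dedge E R e)).
      rewrite mulrC mulr_natr -sumr_const; apply: ler_sum => e.
      by rewrite /P2 !inE => /andP[_ h].
    apply: (le_trans (y := \sum_(e in E) dedge E R e)); last exact: dedge_sum.
    apply: sum_sub_le; last by move=> e he; exact: dedge_ge0.
    apply/fintype.subsetP => e; rewrite /P2 !inE => /andP[he _].
    by rewrite -hU finset.in_setU he.
  have h4N : 4 * (#|S|%:R : R) <= (#|PH|%:R) ^+ 2.
    rewrite -natrX -natrM ler_nat -mulnn; exact: four_S hSsub.
  apply: (@final_real R (nbutterflies E)%:R (nwedges E)%:R eps bb wb #|PH|%:R #|P1|%:R #|P2|%:R) => //.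
  all: first [ by rewrite ltr0n | exact: ler0n | by rewrite -natrD ler_nat | by rewrite ler_nat | idtac ].
move: key; rewrite hBS natrD.
move: (17700%:R : R) => c. move=> key. rewrite mulrBr mulr1. lra.
Qed.
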